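(* Let $P:\mathcal{C}^{op}\to\mathsf{InfSl}$ be a boolean hyperdoctrine. Then $\mathsf{Rel}(P)$, with the Boolean algebra structure on each homset $\mathsf{Rel}(P)[X,Y]=P(X\times Y)$ inherited from $P$, is a peircean bicategory.
   Context: An elementary and existential doctrine is a functor $P:\mathcal{C}^{op}\to\mathsf{InfSl}$ ($\mathcal{C}$ with finite products) with equality predicates $\delta_Y\in P(Y\times Y)$ such that $\alpha\mapsto P_{\langle\pi_1,\pi_2\rangle}(\alpha)\wedge P_{\langle\pi_2,\pi_3\rangle}(\delta_Y)$ is left adjoint to $P_{\mathrm{id}_X\times\Delta_Y}$, and with left adjoints $\exists_{\pi_X}\dashv P_{\pi_X}$ along projections satisfying Beck–Chevalley and Frobenius reciprocity. A boolean hyperdoctrine is such a doctrine in which every $P(X)$ is a Boolean algebra and every $P_f$ a Boolean homomorphism. $\mathsf{Rel}(P)$ is the cartesian bicategory with the objects of $\mathcal{C}$, homsets $P(X\times Y)$, identities $\delta_X$, composition $\phi;\psi=\exists_{\pi_{X\times Z}}(P_{\pi_{X\times Y}}(\phi)\wedge P_{\pi_{Y\times Z}}(\psi))$, tensor $\phi\otimes\psi=P_{\langle\pi_X,\pi_Y\rangle}(\phi)\wedge P_{\langle\pi_U,\pi_V\rangle}(\psi)$, comonoids $\Gamma_P(\Delta_X),\Gamma_P(!_X)$ with $\Gamma_P(f)=P_{f\times\mathrm{id}}(\delta_Y)$, and monoids $P_{\mathrm{id}_{X\times X}\times\Delta_X}(\delta_{X\times X})$, $P_{\mathrm{id}_1\times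 !_X}(\delta_1)$. A cartesian bicategory is a poset-enriched symmetric monoidal category with commutative comonoids $(\mathrm{copy}_X,\mathrm{disc}_X)$ and monoids $(\mathrm{cocopy}_X,\mathrm{codisc}_X)$ forming special Frobenius bimonoids, comonoid left adjoint to monoid, every arrow a lax comonoid homomorphism ($c;\mathrm{copy}\le\mathrm{copy};(c\otimes c)$, $c;\mathrm{disc}\le\mathrm{disc}$), with standard coherence. A map is an arrow $f$ for which these two inequalities are equalities. A peircean bicategory is a cartesian bicategory whose homsets are Boolean algebras (with the given order) such that $f;\neg c=\neg(f;c)$ for every map $f:X\to Y$ and arrow $c:Y\to Z$. *)

(* Defs.v *)
(* boolean algebras = mathcomp ctbDistrLatticeType. *)
From mathcomp Require Import all_boot all_order.

Set Implicit Arguments.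
Unset Strict Implicit.
Unset Printing Implicit Defensive.

Import Order.TTheory.
Local Open Scope order_scope.

(* Composition [cmp g f] is the usual g o f.                           *)
Record FPCat := {
  ob :> Type;
  hom : ob -> ob -> Type;
  idc : forall X, hom X X;
  cmp : forall X Y Z, hom Y Z -> hom X Y -> hom X Z;
  cmp_id_l : forall X Y (f : hom X Y), cmp (idc Y) f = f;
  cmp_id_r : forall X Y (f : hom X Y), cmp f (idc X) = f;
  cmp_assoc : forall X Y Z W (f : hom X Y) (g : hom Y Z) (h : hom Z W),
      cmp h (cmp g f) = cmp (cmp h g) f;
  one : ob;
  bang : forall X, hom X one;
  bang_uniq : forall X (f : hom X one), f = bang X;
  prod : ob -> ob -> ob;
  p1 : forall X Y, hom (prod X Y) X;
  p2 : forall X Y, hom (prod X Y) Y;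
  pair : forall Z X Y, hom Z X -> hom Z Y -> hom Z (prod X Y);
  p1_pair : forall Z X Y (f : hom Z X) (g : hom Z Y), cmp (p1 X Y) (pair f g) = f;
  p2_pair : forall Z X Y (f : hom Z X) (g : hom Z Y), cmp (p2 X Y) (pair f g) = g;
  pair_uniq : forall Z X Y (h : hom Z (prod X Y)),
      h = pair (cmp (p1 X Y) h) (cmp (p2 X Y) h)
}.

Arguments hom {C} : rename.
Arguments idc {C} X : rename.
Arguments cmp {C X Y Z} : rename.
Arguments one {C} : rename.
Arguments bang {C} X : rename.
Arguments prod {C} : rename.
Arguments p1 {C X Y} : rename.
Arguments p2 {C X Y} : rename.
Arguments pair {C Z X Y} : rename.

(* Conventions: X x Y x Y is read as X x (Y x Y); the projections     *)
(* along which exists_ is given are the first product projections     *)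
(* pi_X : X x Y -> X (all other projections differ by an iso).        *)
Record BoolHyperdoctrine (C : FPCat) (d : Order.disp_t) := {
  Pt : C -> ctbDistrLatticeType d;
  re : forall X Y : C, hom X Y -> Pt Y -> Pt X;
  re_id : forall X (a : Pt X), re (idc X) a = a;
  re_comp : forall X Y Z (f : hom X Y) (g : hom Y Z) (a : Pt Z),
      re (cmp g f) a = re f (re g a);
  re_meet : forall X Y (f : hom X Y) (a b : Pt Y), re f (a `&` b) = re f a `&` re f b;
  re_top : forall X Y (f : hom X Y), re f \top = \top;
  re_join : forall X Y (f : hom X Y) (a b : Pt Y), re f (a `|` b) = re f a `|` re f b;
  re_bot : forall X Y (f : hom X Y), re f \bot = \bot;
  re_compl : forall X Y (f : hom X Y) (a : Pt Y), re f (~` a) = ~` re f a;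
  delta : forall Y : C, Pt (prod Y Y);
  delta_adj : forall (X Y : C) (a : Pt (prod X Y)) (b : Pt (prod X (prod Y Y))),
      (re (pair p1 (cmp p1 p2)) a `&` re p2 (delta Y) <= b)
      = (a <= re (pair p1 (pair p2 p2)) b);
  exq : forall X Y : C, Pt (prod X Y) -> Pt X;
  exq_adj : forall (X Y : C) (a : Pt (prod X Y)) (b : Pt X),
      (exq a <= b) = (a <= re p1 b);
  exq_BC : forall (X X' Y : C) (f : hom X' X) (a : Pt (prod X Y)),
      exq (re (pair (cmp f p1) p2) a) = re f (exq a);
  exq_Frob : forall (X Y : C) (a : Pt (prod X Y)) (b : Pt X),
      exq (re p1 b `&` a) = b `&` exq a
}.

Arguments Pt {C d} P X : rename.
Arguments re {C d} P {X Y} f a : rename.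
Arguments delta {C d} P Y : rename.
Arguments exq {C d} P {X Y} a : rename.

(* Data of a poset-enriched symmetric monoidal category equipped with *)
(* comonoids and monoids on every object.  Composition [bseq c d] is  *)
(* diagrammatic: c ; d.                                               *)
Record BicatData := {
  bob : Type;
  bhom : bob -> bob -> Type;
  ble : forall X Y, bhom X Y -> bhom X Y -> Prop;
  bid : forall X, bhom X X;
  bseq : forall X Y Z, bhom X Y -> bhom Y Z -> bhom X Z;
  bI : bob;
  bten : bob -> bob -> bob;
  btenh : forall X Y U V, bhom X Y -> bhom U V -> bhom (bten X U) (bten Y V);
  bassoc : forall X Y Z, bhom (bten (bten X Y) Z) (bten X (bten Y Z));
  bassoc_inv : forall X Y Z, bhom (bten X (bten Y Z)) (bten (bten X Y) Z);
  blu : forall X, bhom (bten bI X) X;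
  blu_inv : forall X, bhom X (bten bI X);
  bru : forall X, bhom (bten X bI) X;
  bru_inv : forall X, bhom X (bten X bI);
  bsym : forall X Y, bhom (bten X Y) (bten Y X);
  bcopy : forall X, bhom X (bten X X);
  bdisc : forall X, bhom X bI;
  bcocopy : forall X, bhom (bten X X) X;
  bcodisc : forall X, bhom bI X
}.

Arguments bhom {B} : rename.
Arguments ble {B X Y} : rename.
Arguments bid {B} X : rename.
Arguments bseq {B X Y Z} : rename.
Arguments bI {B} : rename.
Arguments bten {B} : rename.
Arguments btenh {B X Y U V} : rename.
Arguments bassoc {B} X Y Z : rename.
Arguments bassoc_inv {B} X Y Z : rename.
Arguments blu {B} X : rename.
Arguments blu_inv {B} X : rename.
Arguments bru {B} X : rename.
Arguments bru_inv {B} X : rename.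
Arguments bsym {B} X Y : rename.
Arguments bcopy {B} X : rename.
Arguments bdisc {B} X : rename.
Arguments bcocopy {B} X : rename.
Arguments bcodisc {B} X : rename.

Section CartesianBicategory.
Variable B : BicatData.
Local Notation "c ;; d" := (bseq c d) (at level 60, right associativity).
Local Notation "c ** d" := (btenh c d) (at level 40, left associativity).

Definition poset_enriched : Prop :=
  [/\ forall (X Y : bob B) (c : bhom X Y), ble c c,
      forall (X Y : bob B) (c d e : bhom X Y), ble c d -> ble d e -> ble c e,
      forall (X Y : bob B) (c d : bhom X Y), ble c d -> ble d c -> c = d,
      forall (X Y Z : bob B) (c c' : bhom X Y) (d d' : bhom Y Z),
        ble c c' -> ble d d' -> ble (c ;; d) (c' ;; d') &
      forall (X Y U V : bob B) (c c' : bhom X Y) (d d' : bhom U V),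
        ble c c' -> ble d d' -> ble (c ** d) (c' ** d')].

Definition is_category : Prop :=
  [/\ forall (X Y : bob B) (c : bhom X Y), bid X ;; c = c,
      forall (X Y : bob B) (c : bhom X Y), c ;; bid Y = c &
      forall (X Y Z W : bob B) (c : bhom X Y) (d : bhom Y Z) (e : bhom Z W),
        (c ;; d) ;; e = c ;; (d ;; e)].

Definition symmetric_monoidal : Prop :=
  [/\
      (forall (X U : bob B), bid X ** bid U = bid (bten X U)),
      (forall (X Y Z U V W : bob B) (c : bhom X Y) (d : bhom Y Z) (c' : bhom U V) (d' : bhom V W),
         (c ;; d) ** (c' ;; d') = (c ** c') ;; (d ** d')),
      [/\ (forall (X Y Z : bob B), bassoc X Y Z ;; bassoc_inv X Y Z = bid _)
           /\ (forall (X Y Z : bob B), bassoc_inv X Y Z ;; bassoc X Y Z = bid _),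
          (forall (X : bob B), blu X ;; blu_inv X = bid _)
           /\ (forall (X : bob B), blu_inv X ;; blu X = bid _),
          (forall (X : bob B), bru X ;; bru_inv X = bid _)
           /\ (forall (X : bob B), bru_inv X ;; bru X = bid _) &
          forall (X Y : bob B), bsym X Y ;; bsym Y X = bid _],
      [/\ forall (X Y Z X' Y' Z' : bob B) (f : bhom X X') (g : bhom Y Y') (h : bhom Z Z'),
            ((f ** g) ** h) ;; bassoc X' Y' Z' = bassoc X Y Z ;; (f ** (g ** h)),
          forall (X X' : bob B) (f : bhom X X'), (bid bI ** f) ;; blu X' = blu X ;; f,
          forall (X X' : bob B) (f : bhom X X'), (f ** bid bI) ;; bru X' = bru X ;; f &
          forall (X Y X' Y' : bob B) (f : bhom X X') (g : bhom Y Y'),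
            (f ** g) ;; bsym X' Y' = bsym X Y ;; (g ** f)] &
      [/\ forall (W X Y Z : bob B),
            bassoc (bten W X) Y Z ;; bassoc W X (bten Y Z)
            = (bassoc W X Y ** bid Z) ;; bassoc W (bten X Y) Z ;; (bid W ** bassoc X Y Z),
          forall (X Y : bob B), bassoc X bI Y ;; (bid X ** blu Y) = bru X ** bid Y &
          forall (X Y Z : bob B),
            bassoc X Y Z ;; bsym X (bten Y Z) ;; bassoc Y Z X
            = (bsym X Y ** bid Z) ;; bassoc Y X Z ;; (bid Y ** bsym X Z)]].

Definition bmid (A B' C D : bob B) :
    bhom (bten (bten A B') (bten C D)) (bten (bten A C) (bten B' D)) :=
  bassoc A B' (bten C D)
  ;; (bid A ** bassoc_inv B' C D)
  ;; (bid A ** (bsym B' C ** bid D))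
  ;; (bid A ** bassoc C B' D)
  ;; bassoc_inv A C (bten B' D).

Definition comonoids_monoids : Prop :=
  [/\
      [/\ forall (X : bob B), bcopy X ;; (bcopy X ** bid X) ;; bassoc X X X
                    = bcopy X ;; (bid X ** bcopy X),
          forall (X : bob B), bcopy X ;; (bdisc X ** bid X) ;; blu X = bid X,
          forall (X : bob B), bcopy X ;; (bid X ** bdisc X) ;; bru X = bid X &
          forall (X : bob B), bcopy X ;; bsym X X = bcopy X],
      [/\ forall (X : bob B), bassoc_inv X X X ;; (bcocopy X ** bid X) ;; bcocopy X
                    = (bid X ** bcocopy X) ;; bcocopy X,
          forall (X : bob B), blu_inv X ;; (bcodisc X ** bid X) ;; bcocopy X = bid X,
          forall (X : bob B), bru_inv X ;; (bid X ** bcodisc X) ;; bcocopy X = bid X &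
          forall (X : bob B), bsym X X ;; bcocopy X = bcocopy X],
      [/\ forall (X : bob B), bcopy X ;; bcocopy X = bid X,
          forall (X : bob B), (bcopy X ** bid X) ;; bassoc X X X ;; (bid X ** bcocopy X)
                    = bcocopy X ;; bcopy X &
          forall (X : bob B), (bid X ** bcopy X) ;; bassoc_inv X X X ;; (bcocopy X ** bid X)
                    = bcocopy X ;; bcopy X],
      [/\ forall (X : bob B), ble (bid X) (bcopy X ;; bcocopy X),
          forall (X : bob B), ble (bcocopy X ;; bcopy X) (bid (bten X X)),
          forall (X : bob B), ble (bid X) (bdisc X ;; bcodisc X) &
          forall (X : bob B), ble (bcodisc X ;; bdisc X) (bid bI)] /\
      (forall (X Y : bob B) (c : bhom X Y), ble (c ;; bcopy Y) (bcopy X ;; (c ** c))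
                                 /\ ble (c ;; bdisc Y) (bdisc X)) &
      [/\ forall (X Y : bob B), bcopy (bten X Y) = (bcopy X ** bcopy Y) ;; bmid X X Y Y,
          forall (X Y : bob B), bdisc (bten X Y) = (bdisc X ** bdisc Y) ;; blu bI,
          bcopy (@bI B) = blu_inv (@bI B) &
          bdisc (@bI B) = bid (@bI B)] /\
      [/\ forall (X Y : bob B), bcocopy (bten X Y) = bmid X Y X Y ;; (bcocopy X ** bcocopy Y),
          forall (X Y : bob B), bcodisc (bten X Y) = blu_inv bI ;; (bcodisc X ** bcodisc Y),
          bcocopy (@bI B) = blu (@bI B) &
          bcodisc (@bI B) = bid (@bI B)]].

Definition cartesian_bicategory : Prop :=
  [/\ poset_enriched, is_category, symmetric_monoidal & comonoids_monoids].

Definition is_map (X Y : bob B) (f : bhom X Y) : Prop :=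
  f ;; bcopy Y = bcopy X ;; (f ** f) /\ f ;; bdisc Y = bdisc X.

End CartesianBicategory.

Definition boolean_algebra_on (T : Type) (le : T -> T -> Prop)
    (meet join : T -> T -> T) (top bot : T) (neg : T -> T) : Prop :=
  [/\ [/\ (forall x, le x x),
          (forall x y z, le x y -> le y z -> le x z) &
          (forall x y, le x y -> le y x -> x = y)],
      (forall x y z, le z (meet x y) <-> le z x /\ le z y),
      (forall x y z, le (join x y) z <-> le x z /\ le y z),
      (forall x, le x top /\ le bot x) /\
      (forall x y z, meet x (join y z) = join (meet x y) (meet x z)) &
      (forall x, meet x (neg x) = bot /\ join x (neg x) = top)].

Record HomBoolOps (B : BicatData) := {
  hmeet : forall X Y : bob B, bhom X Y -> bhom X Y -> bhom X Y;
  hjoin : forall X Y : bob B, bhom X Y -> bhom X Y -> bhom X Y;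
  htop : forall X Y, @bhom B X Y;
  hbot : forall X Y, @bhom B X Y;
  hneg : forall X Y : bob B, bhom X Y -> bhom X Y
}.

Definition peircean_bicategory (B : BicatData) (O : HomBoolOps B) : Prop :=
  [/\ cartesian_bicategory B,
      (forall X Y : bob B, boolean_algebra_on (@ble B X Y) (@hmeet B O X Y) (@hjoin B O X Y)
                     (htop O X Y) (hbot O X Y) (@hneg B O X Y)) &
      (forall (X Y Z : bob B) (f : bhom X Y) (c : bhom Y Z),
         is_map f -> bseq f (hneg O c) = hneg O (bseq f c))].

Section RelP.
Variables (C : FPCat) (d : Order.disp_t) (P : BoolHyperdoctrine C d).

Local Notation "g \o f" := (cmp g f).

Definition RelHom (X Y : C) : Type := Pt P (prod X Y).

Definition graphP (X Y : C) (f : hom X Y) : RelHom X Y :=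
  re P (pair (f \o p1) p2) (delta P Y).

(* phi ; psi = exists_{pi_{XxZ}} (P_{pi_{XxY}} phi /\ P_{pi_{YxZ}} psi),
   computed over (X x Z) x Y *)
Definition rel_comp (X Y Z : C) (phi : RelHom X Y) (psi : RelHom Y Z) : RelHom X Z :=
  exq P (re P (pair (p1 \o p1) p2) phi `&` re P (pair p2 (p2 \o p1)) psi).

Definition rel_tensor (X Y U V : C) (phi : RelHom X Y) (psi : RelHom U V)
    : RelHom (prod X U) (prod Y V) :=
  re P (pair (p1 \o p1) (p1 \o p2)) phi `&` re P (pair (p2 \o p1) (p2 \o p2)) psi.

Definition RelP : BicatData := {|
  bob := ob C;
  bhom := RelHom;
  ble := fun (X Y : C) (a b : RelHom X Y) => is_true (a <= b);
  bid := fun X => delta P X;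
  bseq := rel_comp;
  bI := one;
  bten := prod;
  btenh := rel_tensor;
  bassoc := fun X Y Z => graphP (pair (p1 \o p1) (pair (p2 \o p1) p2) :
                                   hom (prod (prod X Y) Z) (prod X (prod Y Z)));
  bassoc_inv := fun X Y Z => graphP (pair (pair p1 (p1 \o p2)) (p2 \o p2) :
                                   hom (prod X (prod Y Z)) (prod (prod X Y) Z));
  blu := fun X => graphP (p2 : hom (prod one X) X);
  blu_inv := fun X => graphP (pair (bang X) (idc X));
  bru := fun X => graphP (p1 : hom (prod X one) X);
  bru_inv := fun X => graphP (pair (idc X) (bang X));
  bsym := fun X Y => graphP (pair p2 p1 : hom (prod X Y) (prod Y X));
  bcopy := fun X => graphP (pair (idc X) (idc X));
  bdisc := fun X => graphP (bang X);
  bcocopy := fun X =>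
    re P (pair p1 (pair p2 p2) : hom (prod (prod X X) X) (prod (prod X X) (prod X X)))
       (delta P (prod X X));
  bcodisc := fun X =>
    re P (pair p1 (bang X \o p2) : hom (prod one X) (prod one one)) (delta P one)
|}.

Definition RelP_ops : HomBoolOps RelP :=
  @Build_HomBoolOps RelP
    (fun (X Y : C) (a b : RelHom X Y) => a `&` b)
    (fun (X Y : C) (a b : RelHom X Y) => a `|` b)
    (fun X Y : C => (\top : RelHom X Y))
    (fun X Y : C => (\bot : RelHom X Y))
    (fun (X Y : C) (a : RelHom X Y) => ~` a).

End RelP.

(* Main.v *)
Require Import Defs.
From mathcomp Require Import all_boot all_order.
Set Implicit Arguments.
Unset Strict Implicit.
Unset Printing Implicit Defensive.
Import Order.Theory.
Local Open Scope order_scope.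

Section Cat.
Variable C : FPCat.
Local Notation "g \o f" := (cmp g f).

Lemma hom_ext (Z X Y : C) (f g : hom Z (prod X Y)) :
  p1 \o f = p1 \o g -> p2 \o f = p2 \o g -> f = g.
Proof. by move=> h1 h2; rewrite (pair_uniq f) (pair_uniq g) h1 h2. Qed.

Lemma pair_cmp (W Z X Y : C) (f : hom Z X) (g : hom Z Y) (h : hom W Z) :
  pair f g \o h = pair (f \o h) (g \o h).
Proof. by apply: hom_ext; rewrite ?p1_pair ?p2_pair cmp_assoc ?p1_pair ?p2_pair. Qed.

Lemma p1_pair_cmp (W Z X Y : C) (f : hom Z X) (g : hom Z Y) (h : hom W Z) :
  p1 \o (pair f g \o h) = f \o h.
Proof. by rewrite cmp_assoc p1_pair. Qed.
Lemma p2_pair_cmp (W Z X Y : C) (f : hom Z X) (g : hom Z Y) (h : hom W Z) :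
  p2 \o (pair f g \o h) = g \o h.
Proof. by rewrite cmp_assoc p2_pair. Qed.

Lemma pair_eta (X Y : C) : pair (@p1 C X Y) p2 = idc _.
Proof. by apply: hom_ext; rewrite ?p1_pair ?p2_pair !cmp_id_r. Qed.

Lemma pair_eta_cmp (Z X Y : C) (h : hom Z (prod X Y)) : pair (p1 \o h) (p2 \o h) = h.
Proof. by rewrite -pair_uniq. Qed.
End Cat.

Ltac hsimp0 := repeat first [ rewrite cmp_id_l | rewrite cmp_id_r | rewrite -cmp_assoc
  | rewrite p1_pair | rewrite p2_pair | rewrite p1_pair_cmp | rewrite p2_pair_cmp
  | rewrite pair_cmp ].

Ltac hsimp := repeat first [ rewrite cmp_id_l | rewrite cmp_id_r | rewrite -cmp_assoc
  | rewrite p1_pair | rewrite p2_pair | rewrite p1_pair_cmp | rewrite p2_pair_cmp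
  | rewrite pair_cmp | rewrite pair_eta | rewrite pair_eta_cmp ].

Ltac homeq := hsimp; first [ reflexivity
  | apply: hom_ext; homeq
  | apply: (etrans (bang_uniq _)); apply: esym; apply: bang_uniq ].

Section Doc.
Variables (C : FPCat) (d : Order.disp_t) (P : BoolHyperdoctrine C d).
Local Notation "g \o f" := (cmp g f).
Local Notation re := (re P).
Local Notation exq := (exq P).
Local Notation dl := (delta P).

Lemma re_mono (X Y : C) (f : hom X Y) (a b : Pt P Y) : a <= b -> re f a <= re f b.
Proof. by move/meet_idPl=> h; rewrite -h re_meet leIr. Qed.

Lemma re_compE (X Y Z : C) (f : hom X Y) (g : hom Y Z) a : re f (re g a) = re (g \o f) a.
Proof. by rewrite re_comp. Qed.

Lemma exq_unit (X Y : C) (a : Pt P (prod X Y)) : a <= re p1 (exq a).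
Proof. by rewrite -exq_adj. Qed.

Lemma exq_elim (X Y : C) (a : Pt P (prod X Y)) b : a <= re p1 b -> exq a <= b.
Proof. by rewrite exq_adj. Qed.

Lemma exq_intro (X Y : C) (a : Pt P (prod X Y)) (t : hom X Y) :
  re (pair (idc X) t) a <= exq a.
Proof.
have := re_mono (pair (idc X) t) (exq_unit a).
by rewrite re_compE p1_pair re_id.
Qed.

Lemma exq_introl (X Y : C) (a : Pt P (prod X Y)) (t : hom X Y) b :
  b <= re (pair (idc X) t) a -> b <= exq a.
Proof. move=> h; exact: le_trans h (exq_intro a t). Qed.

Lemma exq_mono (X Y : C) (a b : Pt P (prod X Y)) : a <= b -> exq a <= exq b.
Proof. by move=> h; apply: exq_elim; apply: le_trans h (exq_unit b). Qed.

Lemma exq_BC' (X X' Y : C) (f : hom X' X) (a : Pt P (prod X Y)) :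
  re f (exq a) = exq (re (pair (f \o p1) p2) a).
Proof. by rewrite exq_BC. Qed.

Lemma exq_frobr (X Y : C) (a : Pt P (prod X Y)) (b : Pt P X) :
  exq a `&` b = exq (a `&` re p1 b).
Proof. by rewrite meetC -exq_Frob meetC. Qed.

Lemma exq_frobl (X Y : C) (a : Pt P (prod X Y)) (b : Pt P X) :
  b `&` exq a = exq (re p1 b `&` a).
Proof. by rewrite -exq_Frob. Qed.

Lemma exq_join (X Y : C) (a b : Pt P (prod X Y)) : exq (a `|` b) = exq a `|` exq b.
Proof.
apply: le_anti; apply/andP; split.
  by apply: exq_elim; rewrite re_join leUx; apply/andP; split;
     [apply: lexUl; exact: exq_unit|apply: lexUr; exact: exq_unit].
by rewrite leUx; apply/andP; split; apply: exq_mono; [exact: leUl|exact: leUr].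
Qed.

Lemma exq_bot (X Y : C) : exq (\bot : Pt P (prod X Y)) = \bot.
Proof. by apply: le_anti; rewrite le0x andbT; apply: exq_elim; rewrite le0x. Qed.

Lemma eq_refl (Z Y : C) (t : hom Z Y) : re (pair t t) (dl Y) = \top.
Proof.
apply: le_anti; rewrite lex1 /=.
have := delta_adj (\top : Pt P (prod Z Y)) (re p2 (dl Y)).
rewrite leIr => /esym h.
have := re_mono (pair (idc Z) t) (elimT idP h).
rewrite re_top !re_compE.
by have -> : p2 \o (pair p1 (pair p2 p2) \o pair (idc Z) t) = pair t t by homeq.
Qed.

Lemma eq_subst_gen (W Y Z : C) (a : Pt P (prod W Y)) (h : hom Z W) (s t : hom Z Y) :
  re (pair s t) (dl Y) `&` re (pair h s) a <= re (pair h t) a.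
Proof.
have := delta_adj a (re (pair p1 (p2 \o p2)) a).
rewrite re_compE.
have -> : (pair p1 (p2 \o p2) \o pair p1 (pair p2 p2)) = idc (prod W Y) by homeq.
rewrite re_id lexx => /idP h0.
have := re_mono (pair h (pair s t)) h0.
rewrite re_meet !re_compE meetC.
have -> : pair p1 (p1 \o p2) \o pair h (pair s t) = pair h s by homeq.
have -> : p2 \o pair h (pair s t) = pair s t by homeq.
have -> : pair p1 (p2 \o p2) \o pair h (pair s t) = pair h t by homeq.
done.
Qed.

Lemma eq_subst (Z Y : C) (a : Pt P (prod Z Y)) (s t : hom Z Y) :
  re (pair s t) (dl Y) `&` re (pair (idc Z) s) a <= re (pair (idc Z) t) a.
Proof. exact: eq_subst_gen. Qed.

Lemma eq_sym (Z Y : C) (s t : hom Z Y) : re (pair s t) (dl Y) <= re (pair t s) (dl Y).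
Proof.
have := eq_subst (re (pair p2 (s \o p1)) (dl Y)) s t.
rewrite !re_compE.
have -> : pair p2 (s \o p1) \o pair (idc Z) s = pair s s by homeq.
have -> : pair p2 (s \o p1) \o pair (idc Z) t = pair t s by homeq.
by rewrite eq_refl meetx1.
Qed.

Lemma eq_symE (Z Y : C) (s t : hom Z Y) : re (pair s t) (dl Y) = re (pair t s) (dl Y).
Proof. by apply: le_anti; rewrite !eq_sym. Qed.

Lemma eq_trans (Z Y : C) (r s t : hom Z Y) :
  re (pair r s) (dl Y) `&` re (pair s t) (dl Y) <= re (pair r t) (dl Y).
Proof.
have := eq_subst (re (pair (r \o p1) p2) (dl Y)) s t.
rewrite !re_compE.
have -> : pair (r \o p1) p2 \o pair (idc Z) s = pair r s by homeq.
have -> : pair (r \o p1) p2 \o pair (idc Z) t = pair r t by homeq.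
by rewrite meetC.
Qed.


Lemma subst_le (W Y Z : C) (a : Pt P (prod W Y)) (h : hom Z W) (s t : hom Z Y) b c :
  b <= re (pair s t) (dl Y) -> b <= re (pair h s) a -> re (pair h t) a = c -> b <= c.
Proof.
move=> h1 h2 <-; apply: le_trans (eq_subst_gen a h s t).
by rewrite lexI h1 h2.
Qed.

Lemma subst_le' (W Y Z : C) (a : Pt P (prod Y W)) (h : hom Z W) (s t : hom Z Y) b c :
  b <= re (pair s t) (dl Y) -> b <= re (pair s h) a -> re (pair t h) a = c -> b <= c.
Proof.
move=> h1 h2 <-; apply: (subst_le (a := re (pair p2 p1) a) (h := h) h1).
  by rewrite re_compE; have -> : pair p2 p1 \o pair h s = pair s h by homeq.
by rewrite re_compE; have -> : pair p2 p1 \o pair h t = pair t h by homeq.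
Qed.

Lemma sym_le (Z Y : C) (s t : hom Z Y) b :
  b <= re (pair t s) (dl Y) -> b <= re (pair s t) (dl Y).
Proof. by rewrite eq_symE. Qed.

Lemma re_delta_eta (Z Y : C) (m : hom Z (prod Y Y)) :
  re m (dl Y) = re (pair (p1 \o m) (p2 \o m)) (dl Y).
Proof. by rewrite pair_eta_cmp. Qed.

Lemma trans_le (Z Y : C) (r s t : hom Z Y) b :
  b <= re (pair r s) (dl Y) -> b <= re (pair s t) (dl Y) -> b <= re (pair r t) (dl Y).
Proof. by move=> h1 h2; apply: le_trans _ (eq_trans r s t); rewrite lexI h1 h2. Qed.

Lemma delta_one : dl (@Defs.one C) = \top.
Proof.
have e : (@p1 C (@Defs.one C) (@Defs.one C)) = p2 by rewrite (bang_uniq p1) (bang_uniq p2).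
transitivity (re (pair p1 p2) (dl (@Defs.one C))); first by rewrite pair_eta re_id.
by rewrite -e eq_refl.
Qed.

End Doc.

Ltac fnorm0 := repeat first [ rewrite re_compE | rewrite re_id | rewrite re_meet
  | rewrite re_join | rewrite re_top | rewrite re_bot | rewrite re_compl
  | rewrite exq_BC' | rewrite eq_refl | rewrite meetx1 | rewrite meet1x
  | rewrite delta_one | progress hsimp ].

Ltac matom := first [ exact: lexx | apply: leIxl; matom | apply: leIxr; matom ].
Ltac eqs n := lazymatch goal with |- is_true (?b <= Defs.re ?P (pair ?r ?t) (delta ?P ?Y)) =>
  first [ matom | apply: sym_le; matom | rewrite eq_refl; exact: lex1
        | lazymatch n with S ?m =>
           match b with
           | context [Defs.re P (pair r ?s) (delta P Y)] =>
               apply: (trans_le (s := s)); [matom | eqs m]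
           | context [Defs.re P (pair ?s r) (delta P Y)] =>
               apply: (trans_le (s := s)); [apply: sym_le; matom | eqs m]
           end end ] end.
Ltac msolve0 := lazymatch goal with
 | |- is_true (_ <= \top) => exact: lex1
 | |- is_true (\bot <= _) => exact: le0x
 | |- is_true (_ <= _ `&` _) => rewrite lexI; apply/andP; split; msolve0
 | |- _ => first [ matom | apply: exq_mono; msolve0 | apply: sym_le; hsimp; matom ] end.

Section Doc2.
Variables (C : FPCat) (d : Order.disp_t) (P : BoolHyperdoctrine C d).
Local Notation "g \o f" := (cmp g f).
Local Notation re := (re P).
Local Notation dl := (delta P).
Lemma delta_prod (X Y : C) : dl (prod X Y) =
  re (pair (p1 \o p1) (p1 \o p2)) (dl X) `&` re (pair (p2 \o p1) (p2 \o p2)) (dl Y).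
Proof.
apply: le_anti; apply/andP; split.
  rewrite lexI; apply/andP; split.
    apply: (subst_le (a := re (pair (p1 \o (p1 \o p1)) (p1 \o p2)) (dl X))
             (h := idc _) (s := p1) (t := p2)); fnorm0 => //; msolve0.
  apply: (subst_le (a := re (pair (p2 \o (p1 \o p1)) (p2 \o p2)) (dl Y))
             (h := idc _) (s := p1) (t := p2)); fnorm0 => //; msolve0.
pose x := p1 \o (@p1 C (prod X Y) (prod X Y)); pose y := p2 \o (@p1 C (prod X Y) (prod X Y)).
pose x' := p1 \o (@p2 C (prod X Y) (prod X Y)); pose y' := p2 \o (@p2 C (prod X Y) (prod X Y)).
apply: (subst_le (a := re (pair (pair (x \o p1) (y \o p1)) (pair (x' \o p1) p2)) (dl (prod X Y)))
          (h := idc _) (s := y) (t := y')).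
- fnorm0; msolve0.
- apply: (subst_le (a := re (pair (pair (x \o p1) (y \o p1)) (pair p2 (y \o p1))) (dl (prod X Y)))
          (h := idc _) (s := x) (t := x')).
  + fnorm0; msolve0.
  + rewrite /x /y; fnorm0; msolve0.
  + rewrite /x /y /y'; fnorm0; done.
- rewrite /x /y /y' /x'; fnorm0; done.
Qed.
End Doc2.

Ltac dexpand := repeat match goal with |- context [Defs.re ?P ?m (delta ?P ?Y)] =>
   lazymatch m with pair _ _ => fail | _ => rewrite (re_delta_eta P m) end end; hsimp0.
Ltac msolve1 := lazymatch goal with
 | |- is_true (_ <= \top) => exact: lex1
 | |- is_true (\bot <= _) => exact: le0x
 | |- is_true (_ <= _ `&` _) => rewrite lexI; apply/andP; split; msolve1
 | |- is_true (_ <= Defs.re _ (pair _ _) (delta _ _)) => eqs 3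
 | |- is_true (?b <= Defs.re ?P (pair ?t1 ?t2) ?c) =>
     first [ matom | apply: exq_mono; msolve1
           | match b with context [Defs.re P (pair ?s1 ?s2) c] =>
               apply: (subst_le (a := c) (h := t1) (s := s2) (t := t2));
               [ eqs 3
               | apply: (subst_le' (a := c) (h := s2) (s := s1) (t := t1));
                 [ eqs 3 | matom | reflexivity ]
               | reflexivity ] end ]
 | |- _ => first [ matom | apply: exq_mono; msolve1 ] end.
Ltac msolve := dexpand; msolve1.

Ltac fnorm := repeat first [ rewrite re_compE | rewrite re_id | rewrite re_meet
  | rewrite re_join | rewrite re_top | rewrite re_bot | rewrite re_compl
  | rewrite exq_BC' | rewrite eq_refl | rewrite meetx1 | rewrite meet1x
  | rewrite delta_one | rewrite delta_prod | rewrite exq_frobr | rewrite exq_frobl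
  | progress hsimp ].
Ltac exE := apply: exq_elim; fnorm.
Tactic Notation "exI" uconstr(t) := refine (exq_introl (t := t) _); fnorm.
Ltac fsolve := apply/le_anti/andP; split; fnorm; msolve.

Section Rel.
Variables (C : FPCat) (d : Order.disp_t) (P : BoolHyperdoctrine C d).
Local Notation "g \o f" := (cmp g f).
Local Notation re := (re P).
Local Notation exq := (exq P).
Local Notation dl := (delta P).
Local Notation G := (graphP P).
Local Notation "a ;; b" := (rel_comp a b) (at level 60, right associativity).
Local Notation "a ** b" := (rel_tensor a b) (at level 40, left associativity).
Definition conv (X Y : C) (a : RelHom P X Y) : RelHom P Y X := re (pair p2 p1) a.



Lemma graph_comp (X Y Z : C) (f : hom X Y) (psi : RelHom P Y Z) :
  G f ;; psi = re (pair (f \o p1) p2) psi.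
Proof.
rewrite /rel_comp /graphP; apply/le_anti/andP; split.
  exE; apply: (subst_le' (a := psi) (h := p2 \o p1) (s := p2) (t := f \o (p1 \o p1)));
  fnorm => //; msolve.
by exI (f \o p1); msolve.
Qed.

Lemma comp_convgraph (X Y Z : C) (phi : RelHom P X Y) (g : hom Z Y) :
  phi ;; conv (G g) = re (pair p1 (g \o p2)) phi.
Proof.
rewrite /rel_comp /conv /graphP; apply/le_anti/andP; split.
  exE; apply: (subst_le (a := phi) (h := p1 \o p1) (s := p2) (t := g \o (p2 \o p1)));
  fnorm => //; msolve.
by exI (g \o p2); msolve.
Qed.

Lemma graph_id (X : C) : G (idc X) = dl X.
Proof. by rewrite /graphP; fnorm. Qed.

Lemma conv_delta (X : C) : conv (dl X) = dl X.
Proof. by rewrite /conv -eq_symE pair_eta re_id. Qed.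

Lemma conv_conv (X Y : C) (a : RelHom P X Y) : conv (conv a) = a.
Proof. by rewrite /conv; fnorm. Qed.

Lemma conv_inj (X Y : C) (a b : RelHom P X Y) : conv a = conv b -> a = b.
Proof. by move=> h; rewrite -(conv_conv a) h conv_conv. Qed.

Lemma comp_assoc (X Y Z W : C) (a : RelHom P X Y) (b : RelHom P Y Z) (c : RelHom P Z W) :
  (a ;; b) ;; c = a ;; (b ;; c).
Proof.
rewrite /rel_comp; apply/le_anti/andP; split.
  exE; exE; exI (@p2 C _ Y); exI (p2 \o (@p1 C _ Y)); msolve.
exE; exE; exI (@p2 C _ Z); exI (p2 \o (@p1 C _ Z)); msolve.
Qed.

Lemma comp_id_l (X Y : C) (a : RelHom P X Y) : dl X ;; a = a.
Proof. by rewrite -graph_id graph_comp; fnorm. Qed.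

Lemma comp_id_r (X Y : C) (a : RelHom P X Y) : a ;; dl Y = a.
Proof. by rewrite -{1}conv_delta -graph_id comp_convgraph; fnorm. Qed.


Lemma conv_comp (X Y Z : C) (a : RelHom P X Y) (b : RelHom P Y Z) :
  conv (a ;; b) = conv b ;; conv a.
Proof. rewrite /rel_comp /conv; fsolve. Qed.

Lemma conv_tens (X Y U V : C) (a : RelHom P X Y) (b : RelHom P U V) :
  conv (a ** b) = conv a ** conv b.
Proof. rewrite /rel_tensor /conv; fsolve. Qed.

Lemma graph_graph (X Y Z : C) (f : hom X Y) (g : hom Y Z) : G f ;; G g = G (g \o f).
Proof. by rewrite graph_comp /graphP; fnorm. Qed.

Lemma graph_tens (X Y U V : C) (f : hom X Y) (g : hom U V) :
  G f ** G g = G (pair (f \o p1) (g \o p2)).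
Proof. rewrite /rel_tensor /graphP; fsolve. Qed.

Lemma graph_conv_le (X Y : C) (g : hom X Y) (h : hom Y X) :
  h \o g = idc X -> G g <= conv (G h).
Proof.
move=> hg; have hg' : forall W (k : hom W X), h \o (g \o k) = k.
  by move=> W k; rewrite cmp_assoc hg cmp_id_l.
rewrite /conv /graphP; fnorm.
apply: (subst_le (a := re (pair (h \o p2) (p1 \o p1)) (dl X)) (h := idc _)
   (s := g \o p1) (t := p2)); fnorm => //.
by rewrite hg' eq_refl lex1.
Qed.

Lemma conv_graph_le (X Y : C) (g : hom X Y) (h : hom Y X) :
  g \o h = idc Y -> conv (G h) <= G g.
Proof.
move=> gh; have gh' : forall W (k : hom W Y), g \o (h \o k) = k.
  by move=> W k; rewrite cmp_assoc gh cmp_id_l.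
rewrite /conv /graphP; fnorm.
apply: (subst_le (a := re (pair (g \o p2) (p2 \o p1)) (dl Y)) (h := idc _)
   (s := h \o p2) (t := p1)); fnorm => //.
by rewrite gh' eq_refl lex1.
Qed.

Lemma graph_iso (X Y : C) (g : hom X Y) (h : hom Y X) :
  h \o g = idc X -> g \o h = idc Y -> G g = conv (G h).
Proof.
by move=> hg gh; apply/le_anti/andP; split;
  [apply: graph_conv_le | apply: conv_graph_le].
Qed.

Lemma comp_graph_iso (X Y Z : C) (a : RelHom P X Y) (g : hom Y Z) (h : hom Z Y) :
  h \o g = idc Y -> g \o h = idc Z -> a ;; G g = re (pair p1 (h \o p2)) a.
Proof. by move=> hg gh; rewrite (graph_iso hg gh) comp_convgraph. Qed.

Lemma tens_comp (X Y Z U V W : C) (a : RelHom P X Y) (b : RelHom P Y Z)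
   (a' : RelHom P U V) (b' : RelHom P V W) :
  (a ;; b) ** (a' ;; b') = (a ** a') ;; (b ** b').
Proof.
rewrite /rel_comp /rel_tensor; apply/le_anti/andP; split.
  fnorm; exE; exE; exI (pair (p2 \o (@p1 C (prod _ Y) V)) (@p2 C (prod _ Y) V)); msolve.
fnorm; exE; exI (p1 \o (@p2 C _ (prod Y V))); exI (p2 \o (@p2 C _ (prod Y V))); msolve.
Qed.

Lemma comp_mono (X Y Z : C) (a a' : RelHom P X Y) (b b' : RelHom P Y Z) :
  a <= a' -> b <= b' -> a ;; b <= a' ;; b'.
Proof.
by move=> h1 h2; apply: exq_mono; apply: leI2; apply: re_mono.
Qed.

Lemma tens_mono (X Y U V : C) (a a' : RelHom P X Y) (b b' : RelHom P U V) :
  a <= a' -> b <= b' -> a ** b <= a' ** b'.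
Proof. by move=> h1 h2; apply: leI2; apply: re_mono. Qed.


Lemma graph_congr (X Y : C) (f g : hom X Y) : f = g -> G f = G g.
Proof. by move->. Qed.



Lemma cocopy_conv (X : C) :
  re (pair p1 (pair p2 p2) : hom (prod (prod X X) X) (prod (prod X X) (prod X X)))
     (dl (prod X X)) = conv (G (pair (idc X) (idc X))).
Proof. rewrite /conv /graphP; fsolve. Qed.

Lemma codisc_conv (X : C) :
  re (pair p1 (bang X \o p2) : hom (prod (@Defs.one C) X) (prod (@Defs.one C) (@Defs.one C))) (dl (@Defs.one C))
  = conv (G (bang X)).
Proof. by rewrite /conv /graphP; fnorm. Qed.

End Rel.

Ltac gsolve := repeat rewrite -graph_id;
  repeat first [ rewrite graph_graph | rewrite graph_tens ];
  apply: graph_congr; homeq.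

Section Main.
Variables (C : FPCat) (d : Order.disp_t) (P : BoolHyperdoctrine C d).
Local Notation "g \o f" := (cmp g f).
Local Notation re := (re P).
Local Notation exq := (exq P).
Local Notation dl := (delta P).
Local Notation G := (graphP P).

Lemma RelP_poset : poset_enriched (RelP P).
Proof.
split => /=.
- by move=> *; exact: lexx.
- by move=> X Y c d' e; apply: le_trans.
- by move=> X Y c d' h1 h2; apply/le_anti; rewrite h1 h2.
- by move=> *; apply: comp_mono.
- by move=> *; apply: tens_mono.
Qed.

Lemma RelP_cat : is_category (RelP P).
Proof.
split => /=.
- by move=> *; apply: comp_id_l.
- by move=> *; apply: comp_id_r.
- by move=> *; apply: comp_assoc.
Qed.

Lemma RelP_symmon : symmetric_monoidal (RelP P).
Proof.
split => /=.
- by move=> X U; rewrite /rel_tensor; fsolve.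
- by move=> *; apply: tens_comp.
- split; [split|split|split|]; move=> *; gsolve.
- split.
  + move=> X Y Z X' Y' Z' f g h.
    rewrite (comp_graph_iso _ (h := pair (pair p1 (p1 \o p2)) (p2 \o p2))); try homeq.
    rewrite graph_comp /rel_tensor; fsolve.
  + move=> X X' f.
    rewrite (comp_graph_iso _ (h := pair (bang X') (idc X'))); try homeq.
    rewrite graph_comp /rel_tensor; fsolve.
  + move=> X X' f.
    rewrite (comp_graph_iso _ (h := pair (idc X') (bang X'))); try homeq.
    rewrite graph_comp /rel_tensor; fsolve.
  + move=> X Y X' Y' f g.
    rewrite (comp_graph_iso _ (h := pair p2 p1)); try homeq.
    rewrite graph_comp /rel_tensor; fsolve.
- split; move=> *; gsolve.
Qed.


Ltac gcollapse := repeat rewrite -graph_id;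
  repeat first [ rewrite graph_graph | rewrite graph_tens | rewrite comp_convgraph
               | rewrite graph_comp ].
Ltac csolve := apply: conv_inj;
  rewrite ?cocopy_conv ?codisc_conv;
  repeat rewrite -graph_id;
  repeat first [ rewrite graph_graph | rewrite graph_tens ];
  rewrite ?conv_comp ?conv_tens ?conv_conv ?conv_delta;
  gcollapse;
  rewrite /conv /graphP /rel_tensor; fsolve.

Lemma RelP_comon : comonoids_monoids (RelP P).
Proof.
split => /=.
- split; move=> *; gsolve.
- split; move=> *; csolve.
- split.
  + move=> X; rewrite cocopy_conv comp_convgraph /graphP; fsolve.
  + move=> X; rewrite !cocopy_conv; repeat rewrite -graph_id.
    repeat first [ rewrite graph_graph | rewrite graph_tens ].
    rewrite ?graph_comp /rel_comp /rel_tensor /conv /graphP; fnorm.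
    apply/le_anti/andP; split; last by exE; msolve.
    exI (p1 \o p1); msolve.
  + move=> X; rewrite !cocopy_conv; repeat rewrite -graph_id.
    repeat first [ rewrite graph_graph | rewrite graph_tens ].
    rewrite ?graph_comp /rel_comp /rel_tensor /conv /graphP; fnorm.
    apply/le_anti/andP; split; last by exE; msolve.
    exI (p1 \o p1); msolve.
- split; first split.
  + move=> X; rewrite cocopy_conv comp_convgraph /graphP; fnorm; msolve.
  + move=> X; rewrite cocopy_conv /rel_comp /conv /graphP; fnorm; exE; msolve.
  + move=> X; rewrite /rel_comp /graphP; fnorm; exI (bang _); fnorm; msolve.
  + move=> X; rewrite /rel_comp /graphP; fnorm; msolve.
  + move=> X Y c; split.
      by rewrite graph_comp /rel_comp /rel_tensor /graphP; fnorm; exE; msolve.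
    rewrite /rel_comp /graphP; fnorm; msolve.
- split; split.
  + move=> X Y; gsolve.
  + move=> X Y; gsolve.
  + apply: graph_congr; homeq.
  + gsolve.
  + move=> X Y; csolve.
  + move=> X Y; csolve.
  + csolve.
  + csolve.
Qed.


Lemma RelP_bool (X Y : C) :
  boolean_algebra_on (@ble (RelP P) X Y) (@hmeet _ (RelP_ops P) X Y)
    (@hjoin _ (RelP_ops P) X Y) (htop (RelP_ops P) X Y) (hbot (RelP_ops P) X Y)
    (@hneg _ (RelP_ops P) X Y).
Proof.
split => /=.
- split.
  + by move=> x; exact: lexx.
  + by move=> x y z; apply: le_trans.
  + by move=> x y h1 h2; apply/le_anti; rewrite h1 h2.
- by move=> x y z; rewrite lexI; split => [/andP//|[-> ->]].
- by move=> x y z; rewrite leUx; split => [/andP//|[-> ->]].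
- split; last by move=> x y z; rewrite meetUr.
  by move=> x; rewrite lex1 le0x.
- by move=> x; rewrite meetxC joinxC.
Qed.

Lemma compl_uniq (X Y : C) (x y : RelHom P X Y) :
  x `&` y = \bot -> x `|` y = \top -> y = ~` x.
Proof.
move=> h1 h2.
have e1 : y = y `&` ~` x.
  by rewrite -[LHS]meetx1 -(joinxC x) meetUr (meetC y x) h1 join0x.
have e2 : ~` x = ~` x `&` y.
  by rewrite -[LHS]meetx1 -h2 meetUr meetCx join0x.
by rewrite e1 [RHS]e2 meetC.
Qed.

Lemma comp_joinr (X Y Z : C) (a : RelHom P X Y) (b b' : RelHom P Y Z) :
  rel_comp a (b `|` b') = rel_comp a b `|` rel_comp a b'.
Proof. by rewrite /rel_comp re_join meetUr exq_join. Qed.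

Lemma RelP_peirce (X Y Z : C) (f : RelHom P X Y) (c : RelHom P Y Z) :
  is_map (B := RelP P) f -> rel_comp f (~` c) = ~` (rel_comp f c).
Proof.
rewrite /is_map /= => -[H1 H2].
have sv : forall W (x : hom W X) (y1 y2 : hom W Y),
    re (pair x y1) f `&` re (pair x y2) f <= re (pair y1 y2) (dl Y).
  move=> W x y1 y2.
  have E : re (pair p1 (p1 \o p2)) f `&` re (pair p1 (p2 \o p2)) f
           = rel_comp (G (pair (idc X) (idc X))) (rel_tensor f f).
    by rewrite graph_comp /rel_tensor; fnorm.
  have h0 : re (pair p1 (p1 \o p2)) f `&` re (pair p1 (p2 \o p2)) f <= re p2 (dl Y).
    by rewrite E -H1 /rel_comp /graphP; fnorm; exE; msolve.
  have := re_mono (pair x (pair y1 y2)) h0.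
  by fnorm.
apply: compl_uniq.
  apply/le_anti; rewrite le0x andbT.
  rewrite /rel_comp; fnorm; exE; exE.
  have hs := sv (prod (prod (prod X Z) Y) Y) (p1 \o (p1 \o p1)) (p2 \o p1) p2.
  apply: (@le_trans _ _ (re (pair p2 (p2 \o (p1 \o p1))) c `&` ~` re (pair p2 (p2 \o (p1 \o p1))) c)); last by rewrite meetxC.
  rewrite lexI; apply/andP; split; last by matom.
  apply: (subst_le' (a := c) (h := p2 \o (p1 \o p1)) (s := p2 \o p1) (t := p2)); [|matom|reflexivity].
  apply: le_trans _ hs; msolve.
rewrite -comp_joinr joinxC.
move: H2; rewrite /rel_comp /graphP; fnorm.
move/(congr1 (re (pair p1 (bang Z \o p2)))); fnorm.
by move=> h; exact: h.
Qed.

End Main.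

Theorem proposition30 (C : FPCat) (d : Order.disp_t) (P : BoolHyperdoctrine C d) :
  peircean_bicategory (RelP_ops P).
Proof.
split.
- split; [exact: RelP_poset | exact: RelP_cat | exact: RelP_symmon | exact: RelP_comon].
- move=> X Y; exact: RelP_bool.
- move=> X Y Z f c hf; exact: RelP_peirce hf.
Qed.
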